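(* For parameters $b>0$, $\sigma>0$, $r\ge0$, $q\ge0$ with $r\neq q$, loan principal $K\ge b$, maturity $T>t\ge0$ and house price $S\ge b$, write $\tau=T-t$, $\theta=\frac{2(r-q)}{\sigma^2}$, $z_1=\frac{\ln(S/K)+(r-q+\frac12\sigma^2)\tau}{\sigma\sqrt\tau}$, $z_2=\frac{\ln(b^2/(KS))+(r-q+\frac12\sigma^2)\tau}{\sigma\sqrt\tau}$, $z_3=\frac{\ln(S/b)+(r-q+\frac12\sigma^2)\tau}{\sigma\sqrt\tau}$, $z_4=\frac{\ln(b/S)+(r-q+\frac12\sigma^2)\tau}{\sigma\sqrt\tau}$, and define $$\begin{aligned}P(t,S)={}&Ke^{-r\tau}\Phi(-z_1+\sigma\sqrt\tau)-Se^{-q\tau}\Phi(-z_1)-be^{-r\tau}\Phi(-z_3+\sigma\sqrt\tau)+Se^{-q\tau}\Phi(-z_3)\\&+\frac1\theta\Bigl(be^{-r\tau}\Phi(-z_3+\sigma\sqrt\tau)-Se^{-q\tau}\bigl(\tfrac bS\bigr)^{1+\theta}\bigl(\Phi(z_4)-\Phi(z_2)\bigr)-Ke^{-r\tau}\bigl(\tfrac Kb\bigr)^{\theta-1}\Phi(z_2-\theta\sigma\sqrt\tau)\Bigr),\end{aligned}$$ where $\Phi$ is the standard normal distribution function. Suppose $r=0$ and $0<q<\frac12\sigma^2$. Then for every fixed $t\ge0$ and $S\ge b$ there exists $T'>t$ such that for all $T>T'$, $P(t,S)<Ke^{-r(T-t)}-Se^{-q(T-t)}$ (i.e. $P(t,S)<K-Se^{-q(T-t)}$),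 violating the lower bound $P(t,S)\ge Ke^{-r(T-t)}-Se^{-q(T-t)}$.
   Context: $P$ is the published pricing formula for a no-negative-equity guarantee (a European put on a house price modelled as a reflected geometric Brownian motion with lower reflecting boundary $b$, volatility $\sigma$, risk-free rate $r$ and deferment rate $q$ playing the role of a dividend yield). Under any equivalent risk-neutral measure the price must satisfy $P(t,S)\ge Ke^{-r(T-t)}-Se^{-q(T-t)}$. *)

(* Defs.v *)
From Stdlib Require Import Reals.
From Coquelicot Require Import Coquelicot.
Open Scope R_scope.

Definition phi_density (u : R) : R := exp (- (u * u) / 2) / sqrt (2 * PI).

Definition Phi (x : R) : R := RInt_gen phi_density (Rbar_locally m_infty) (at_point x).

Definition nneg_price (b sigma r q K T t S : R) : R :=
  let tau := T - t in
  let theta := 2 * (r - q) / (sigma ^ 2) in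
  let sst := sigma * sqrt tau in
  let mu := (r - q + sigma ^ 2 / 2) * tau in
  let z1 := (ln (S / K) + mu) / sst in
  let z2 := (ln (b ^ 2 / (K * S)) + mu) / sst in
  let z3 := (ln (S / b) + mu) / sst in
  let z4 := (ln (b / S) + mu) / sst in
  K * exp (- r * tau) * Phi (- z1 + sst) - S * exp (- q * tau) * Phi (- z1)
  - b * exp (- r * tau) * Phi (- z3 + sst) + S * exp (- q * tau) * Phi (- z3)
  + / theta * ( b * exp (- r * tau) * Phi (- z3 + sst)
               - S * exp (- q * tau) * Rpower (b / S) (1 + theta) * (Phi z4 - Phi z2)
               - K * exp (- r * tau) * Rpower (K / b) (theta - 1) * Phi (z2 - theta * sst)).

(* Main.v *)
Require Import Defs.
From Stdlib Require Import Reals Lra.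
From Coquelicot Require Import Coquelicot.
Open Scope R_scope.

Definition dq (f : R -> R) (x l h : R) : R :=
  if Req_EM_T h 0 then l else ((f (x + h) - f x) / h).

Lemma dq0 f x l : dq f x l 0 = l.
Proof. unfold dq. destruct (Req_EM_T 0 0) as [e|n]. reflexivity. now exfalso. Qed.
Lemma dqn f x l h : h <> 0 -> dq f x l h = ((f (x + h) - f x) / h).
Proof. intro H. unfold dq. destruct (Req_EM_T h 0) as [e|n]. now exfalso. reflexivity. Qed.

Lemma dq_cont f x l : derivable_pt_lim f x l -> continuity_pt (dq f x l) 0.
Proof.
intros H eps Heps.
destruct (H eps Heps) as [d Hd].
exists d; split. exact (cond_pos d).
intros h [[_ Hh0] Hh].
rewrite dq0, dqn. 2: now apply not_eq_sym.
simpl in Hh. unfold R_dist in Hh |- *.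
rewrite Rminus_0_r in Hh.
apply Hd. now apply not_eq_sym. exact Hh.
Qed.

Module MC.
From mathcomp Require Import all_boot all_order all_algebra.
From mathcomp Require Import all_classical all_reals.
From mathcomp Require Import topology normedtype derive realfun exp trigo.
From mathcomp Require Import lebesgue_measure lebesgue_integral ftc gauss_integral.
From mathcomp Require Import Rstruct Rstruct_topology.
Import Order.TTheory GRing.Theory Num.Theory.
Import numFieldNormedType.Exports.
Local Open Scope classical_set_scope.
Local Open Scope ring_scope.

Definition RR : realType := R.

Lemma bridge_derive (f : RR -> RR) (x l : RR) :
  derivable_pt_lim f x l -> is_derive x 1 f l.
Proof.
move=> H.
have C := dq_cont _ _ _ H.
move/continuity_pt_cvg' : C => C.
have E : (fun h : RR => h^-1 *: ((f \o shift x) (h *: 1) - f x)) @ 0^' --> l.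
  have -> : l = dq f x l 0 by rewrite dq0.
  apply: cvg_trans C; apply: near_eq_cvg.
  near=> h.
  have hn0 : h != 0 by near: h; exact: nbhs_dnbhs_neq.
  rewrite dqn; last by move/eqP: hn0.
  rewrite [h%:A]mulr1 /comp /= RdivE RminusE RplusE (addrC x h) mulrC; done.
apply: DeriveDef; first by apply/cvg_ex; exists l.
by rewrite /derive; apply: cvg_lim.
Unshelve. all: by end_near. Qed.
Lemma pi_eq : pi = PI :> RR.
Proof.
pose d := fun x : RR => atan x - Ratan.atan x.
have hd : forall x, is_derive x (1:RR) d 0.
  move=> x.
  have h1 : is_derive x (1:RR) atan ((1 + x ^+ 2)^-1).
    rewrite -derive1_atan derive1E; apply: derivableP; exact: derivable_atan.
  have h2 := bridge_derive _ _ _ (Ratan.derivable_pt_lim_atan x).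
  have -> : (0:RR) = (1 + x ^+ 2)^-1 - Rinv (Rplus 1 (pow x 2)).
    by rewrite RinvE (RpowE x 2) subrr.
  exact: is_deriveB.
have := is_derive_0_is_cst 1 0 hd.
rewrite /d atan1 atan0 Ratan.atan_1 Ratan.atan_0 subrr => /eqP.
rewrite subr_eq0 => /eqP. move=> h.
have h4 : (IZR 4 : RR) = 4%:R.
  by rewrite -INRE /=; lra.
move: h; rewrite RdivE h4 => /mulIf; apply.
by rewrite invr_eq0 pnatr_eq0.
Qed.

Lemma gauss_bridge (F : RR -> RR) :
  (forall y, derivable_pt_lim F y (exp (- (y * y)))) ->
  forall x : RR, 0 < x -> gauss_integral_proof.integral0_gauss x = F x - F 0.
Proof.
move=> HF x x0.
have D : forall y : RR, is_derive y (1:RR) F (gauss_fun y).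
  move=> y; rewrite /gauss_fun -RexpE expr2.
  exact: (bridge_derive _ _ _ (HF y)).
have C : forall y : RR, {for y, continuous F}.
  move=> y; apply: differentiable_continuous; apply/derivable1_diffP.
  by have [] := D y.
rewrite /gauss_integral_proof.integral0_gauss /Rintegral.
rewrite (continuous_FTC2 (F := F)) //=.
- apply: continuous_subspaceT => y; exact: continuous_gauss_fun.
- split.
  + by move=> y _; have [] := D y.
  + apply: cvg_dnbhs_at_right; apply/continuous_withinNx; exact: C.
  + apply: cvg_dnbhs_at_left; apply/continuous_withinNx; exact: C.
- move=> y _; rewrite derive1E; by have [_ ->] := D y.
Qed.

Lemma gauss_sq_lim (F : R -> R) :
  (forall y, derivable_pt_lim F y (exp (Ropp (Rmult y y)))) ->
  forall eps : R, Rlt (IZR Z0) eps -> exists M : R, Rlt (IZR Z0) M /\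
    forall x : R, Rlt M x ->
      Rlt (Rabs (Rminus (Rmult (Rminus (F x) (F (IZR Z0))) (Rminus (F x) (F (IZR Z0)))) (Rdiv PI (IZR 4)))) eps.
Proof.
move=> HF eps /RltP eps0.
have L := @gauss_integral_proof.cvg_integral0_gauss_sqr RR.
move/cvgrPdist_lt : L => /(_ eps eps0) [M [_ HM]].
exists (Num.max M 1); split.
  by apply/RltP; rewrite lt_max ltr01 orbT.
move=> x /RltP; rewrite gt_max => /andP [Mx x1].
have x0 : 0 < x by apply: lt_trans x1.
have := HM x Mx.
rewrite (gauss_bridge _ HF _ x0) pi_eq RabsE distrC => /RltP H.
move: H; rewrite expr2 RminusE RmultE RdivE.
have h4 : (IZR 4 : RR) = 4%:R by rewrite -INRE /=; lra.
by rewrite h4.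
Qed.
End MC.

Lemma phi_ex_der x : ex_derive phi_density x.
Proof. unfold phi_density. auto_derive. exact I. Qed.

Lemma phi_cont x : continuous phi_density x.
Proof. apply (@ex_derive_continuous R_AbsRing R_NormedModule), phi_ex_der. Qed.

Lemma sqrt2PI_pos : 0 < sqrt (2 * PI).
Proof. apply sqrt_lt_R0. generalize PI_RGT_0; lra. Qed.

Lemma phi_pos x : 0 < phi_density x.
Proof. unfold phi_density. apply Rdiv_lt_0_compat. apply exp_pos. apply sqrt2PI_pos. Qed.

Lemma phi_even x : phi_density (- x) = phi_density x.
Proof. unfold phi_density. f_equal. f_equal. f_equal. ring. Qed.

Lemma phi_ex a b : ex_RInt phi_density a b.
Proof. apply (@ex_RInt_continuous R_CompleteNormedModule). intros z _. apply phi_cont. Qed.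

Definition J x := RInt phi_density 0 x.

Lemma J0 : J 0 = 0.
Proof. unfold J. exact (@RInt_point R_CompleteNormedModule 0 phi_density). Qed.

Lemma J_deriv y : is_derive J y (phi_density y).
Proof.
apply (is_derive_RInt phi_density J 0 y).
- apply filter_forall. intros b. apply (@RInt_correct R_CompleteNormedModule), phi_ex.
- apply phi_cont.
Qed.

Lemma J_chasles x y : J y - J x = RInt phi_density x y.
Proof.
unfold J. rewrite <- (@RInt_Chasles R_CompleteNormedModule phi_density 0 x y) by apply phi_ex.
simpl. unfold plus; simpl. ring.
Qed.

Lemma J_mono x y : x <= y -> J x <= J y.
Proof.
intros H. assert (0 <= RInt phi_density x y).
{ apply RInt_ge_0. exact H. apply phi_ex. intros z _. left. apply phi_pos. }
rewrite <- J_chasles in H0. lra.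
Qed.

Lemma J_odd x : J (- x) = - J x.
Proof.
unfold J.
assert (E := @RInt_comp_lin R_CompleteNormedModule phi_density (-1) 0 0 x (phi_ex _ _)).
replace (-1 * 0 + 0) with 0 in E by ring.
replace (-1 * x + 0) with (- x) in E by ring.
rewrite <- E.
rewrite <- (@RInt_opp R_CompleteNormedModule) by (apply (@ex_RInt_continuous R_CompleteNormedModule); intros z _; apply phi_cont).
apply RInt_ext. intros z _.
unfold scal, opp; simpl. unfold mult; simpl.
replace (-1 * z + 0) with (- z) by ring. rewrite phi_even. ring.
Qed.

Definition FF x := sqrt PI * J (sqrt 2 * x).

Lemma sqrt2_pos : 0 < sqrt 2.
Proof. apply sqrt_lt_R0. lra. Qed.
Lemma sqrtPI_pos : 0 < sqrt PI.
Proof. apply sqrt_lt_R0. apply PI_RGT_0. Qed.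

Lemma FF_deriv y : derivable_pt_lim FF y (exp (- (y * y))).
Proof.
apply is_derive_Reals.
assert (H : is_derive FF y (sqrt PI * (sqrt 2 * phi_density (sqrt 2 * y)))).
{ unfold FF. apply (is_derive_scal (fun x => J (sqrt 2 * x))).
  apply (@is_derive_comp R_AbsRing R_NormedModule J (fun x => sqrt 2 * x) y).
  apply J_deriv.
  assert (Hl : is_derive (fun x : R => sqrt 2 * x) y (sqrt 2 * 1)).
  { apply (is_derive_scal (fun x => x)). apply (@is_derive_id R_AbsRing). }
  rewrite Rmult_1_r in Hl. exact Hl. }
replace (exp (- (y * y))) with (sqrt PI * (sqrt 2 * phi_density (sqrt 2 * y))).
exact H.
unfold phi_density.
rewrite sqrt_mult_alt by lra.
replace (- (sqrt 2 * y * (sqrt 2 * y)) / 2) with (- (y * y)).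
2: { replace (sqrt 2 * y * (sqrt 2 * y)) with ((sqrt 2 * sqrt 2) * (y * y)) by ring.
     rewrite sqrt_sqrt by lra. field. }
generalize sqrt2_pos sqrtPI_pos; intros. field. split; lra.
Qed.

Lemma J_sq_lim e : 0 < e -> exists M, forall y, M < y -> Rabs (J y * J y - 1/4) < e.
Proof.
intros He.
assert (HePI : IZR Z0 < e * PI) by (generalize PI_RGT_0; intros; simpl; nra).
destruct (MC.gauss_sq_lim FF FF_deriv (e * PI) HePI) as [M [HM0 HM]].
exists (sqrt 2 * M). intros y Hy.
generalize sqrt2_pos sqrtPI_pos PI_RGT_0; intros s2 sP P0.
assert (Hx : M < y / sqrt 2).
{ apply (Rmult_lt_reg_l (sqrt 2)). exact s2. field_simplify; lra. }
specialize (HM _ Hx).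
unfold FF in HM.
replace (sqrt 2 * (y / sqrt 2)) with y in HM by (field; lra).
replace (sqrt 2 * IZR Z0) with 0 in HM by ring.
rewrite J0 in HM.
replace ((sqrt PI * J y - sqrt PI * 0) * (sqrt PI * J y - sqrt PI * 0) - PI / IZR 4)
  with (PI * (J y * J y - 1/4)) in HM.
2: { replace ((sqrt PI * J y - sqrt PI * 0) * (sqrt PI * J y - sqrt PI * 0))
       with ((sqrt PI * sqrt PI) * (J y * J y)) by ring.
     rewrite sqrt_sqrt by lra. field. }
rewrite Rabs_mult, (Rabs_right PI) in HM by lra.
apply (Rmult_lt_reg_l PI). exact P0. lra.
Qed.

Lemma J_le_half x : J x <= 1/2.
Proof.
destruct (Rle_lt_dec (J x) (1/2)) as [H|H]. exact H. exfalso.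
assert (Hd : 0 < J x * J x - 1/4) by nra.
destruct (J_sq_lim _ Hd) as [M HM].
set (y := Rmax x (M + 1)).
assert (Hy1 : x <= y) by apply Rmax_l.
assert (Hy2 : M + 1 <= y) by apply Rmax_r.
specialize (HM y ltac:(lra)).
assert (Hm := J_mono _ _ Hy1).
apply Rabs_def2 in HM. nra.
Qed.

Lemma J_ge_mhalf x : - (1/2) <= J x.
Proof.
assert (H := J_le_half (- x)). rewrite J_odd in H. lra.
Qed.

Lemma J_nonneg x : 0 <= x -> 0 <= J x.
Proof. intros H. rewrite <- J0. apply J_mono. exact H. Qed.

Lemma J_lim e : 0 < e -> exists M, forall y, M < y -> 1/2 - e <= J y.
Proof.
intros He.
set (e' := Rmin e (1/2)).
assert (He'1 : e' <= e) by apply Rmin_l.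
assert (He'2 : e' <= 1/2) by apply Rmin_r.
assert (He'0 : 0 < e') by (apply Rmin_glb_lt; lra).
destruct (J_sq_lim (e' / 2) ltac:(lra)) as [M HM].
exists (Rmax M 0). intros y Hy.
assert (HyM : M < y) by (eapply Rle_lt_trans; [apply Rmax_l|exact Hy]).
assert (Hy0 : 0 <= y) by (left; eapply Rle_lt_trans; [apply Rmax_r|exact Hy]).
specialize (HM y HyM). apply Rabs_def2 in HM.
assert (Hj0 := J_nonneg y Hy0). assert (Hj1 := J_le_half y).
destruct (Rle_lt_dec (1/2 - e') (J y)) as [H|H]. lra.
exfalso. nra.
Qed.

Lemma J_lim_minf : filterlim J (Rbar_locally m_infty) (locally (- (1/2))).
Proof.
intros P [eps HP].
destruct (J_lim (eps / 2) ltac:(destruct eps; simpl; lra)) as [M HM].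
exists (- M). intros x Hx.
apply HP.
assert (H1 := HM (- x) ltac:(lra)).
rewrite J_odd in H1.
assert (H2 := J_ge_mhalf x).
unfold ball; simpl; unfold AbsRing_ball, abs, minus, plus, opp; simpl.
destruct eps as [e He]; simpl in *.
rewrite Rabs_right by lra. lra.
Qed.

Lemma Phi_eq x : Phi x = J x + 1/2.
Proof.
unfold Phi.
apply is_RInt_gen_unique.
assert (H : is_RInt_gen (Derive J) (Rbar_locally m_infty) (at_point x) (J x - - (1/2))).
{ apply is_RInt_gen_Derive.
  - apply filter_forall. intros ab z _. eexists. apply J_deriv.
  - apply filter_forall. intros ab z _.
    apply (continuous_ext phi_density). intros w. rewrite (is_derive_unique J w (phi_density w) (J_deriv w)). reflexivity.
    apply phi_cont.
  - apply J_lim_minf.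
  - intros P HP. unfold filtermap, at_point. exact (locally_singleton _ _ HP). }
replace (J x + 1/2) with (J x - - (1/2)) by ring.
apply (is_RInt_gen_ext (Derive J)).
- apply filter_forall. intros ab z _. apply (is_derive_unique J z (phi_density z) (J_deriv z)).
- exact H.
Qed.

Lemma Phi_bounds x : 0 <= Phi x <= 1.
Proof. rewrite Phi_eq. generalize (J_le_half x) (J_ge_mhalf x). lra. Qed.

Lemma Phi_lim e : 0 < e -> exists M, forall y, M < y -> 1 - e <= Phi y.
Proof.
intros He. destruct (J_lim e He) as [M HM]. exists M. intros y Hy.
rewrite Phi_eq. specialize (HM y Hy). lra.
Qed.

Lemma main_ineq (K S b th E c1 c2 one pA p1 pB p3 p4 p2 pC : R) :
  0 < b -> b <= S -> b <= K -> th < 0 -> 0 < E -> 0 < c1 -> 0 <= K * c2 <= b ->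
  one = 1 ->
  0 <= pA <= 1 -> 0 <= p1 <= 1 -> 0 <= pB <= 1 -> 0 <= p3 <= 1 ->
  0 <= p4 <= 1 -> 0 <= p2 <= 1 -> 0 <= pC <= 1 ->
  1 - 1 / (4 * (1 + - / th)) <= pB ->
  E * (2 * S + (- / th) * S * c1) < b / 2 ->
  K * one * pA - S * E * p1 - b * one * pB + S * E * p3
  + / th * (b * one * pB - S * E * c1 * (p4 - p2) - K * one * c2 * pC)
  < K * one - S * E.
Proof.
intros hb hS hK hth hE hc1 [hc2 hc2'] -> [hA hA'] [h1 h1'] [hB hB'] [h3 h3'] [h4 h4'] [h2 h2'] [hC hC'] hBl hEs.
set (u := - / th) in *.
assert (hu : 0 < u) by (unfold u; apply Ropp_0_gt_lt_contravar, Rinv_lt_0_compat; exact hth).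
replace (/ th) with (- u) by (unfold u; ring).
assert (hK0 : 0 < K) by lra. assert (hS0 : 0 < S) by lra.
assert (e1 : K * 1 * pA <= K * 1) by nra.
assert (e2 : 0 <= S * E * p1) by (apply Rmult_le_pos; [nra|lra]).
assert (hSE0 : 0 < S * E) by (apply Rmult_lt_0_compat; lra).
assert (e3 : S * E * p3 <= S * E) by nra.
assert (hSE : 0 <= u * S * E * c1) by (repeat apply Rmult_le_pos; lra).
assert (e4 : u * (S * E * c1 * (p4 - p2)) <= u * S * E * c1).
{ replace (u * (S * E * c1 * (p4 - p2))) with ((u * S * E * c1) * (p4 - p2)) by ring. nra. }
assert (e5 : K * 1 * c2 * pC <= b) by nra.
assert (e6 : u * (K * 1 * c2 * pC) <= u * b) by nra.
assert (e7 : (1 + u) * b * pB >= (1 + u) * b - b / 4).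
{ assert (h : (1 + u) * b * (1 - 1 / (4 * (1 + u))) = (1 + u) * b - b / 4) by (field; lra).
  assert (h' : (1 + u) * b * (1 - 1 / (4 * (1 + u))) <= (1 + u) * b * pB).
  { apply Rmult_le_compat_l. nra. exact hBl. }
  lra. }
assert (e8 : E * (2 * S + u * S * c1) = 2 * S * E + u * S * E * c1) by ring.
nra.
Qed.

Lemma Rpower_pos x y : 0 < Rpower x y.
Proof. unfold Rpower. apply exp_pos. Qed.

Theorem proposition3p5 (b sigma r q K t S : R)
  (hb : 0 < b) (hsigma : 0 < sigma) (hr0 : 0 <= r) (hq0 : 0 <= q) (hrq : r <> q)
  (hK : b <= K) (ht : 0 <= t) (hS : b <= S)
  (hr : r = 0) (hq : 0 < q) (hq2 : q < sigma ^ 2 / 2) :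
  exists T' : R, t < T' /\
    forall T : R, T' < T ->
      nneg_price b sigma r q K T t S < K * exp (- r * (T - t)) - S * exp (- q * (T - t)).
Proof.
subst r.
set (th := 2 * (0 - q) / sigma ^ 2).
assert (hs2 : 0 < sigma ^ 2) by (apply pow_lt; exact hsigma).
assert (hth : th < 0).
{ unfold th. unfold Rdiv. apply Rmult_neg_pos. lra. apply Rinv_0_lt_compat. exact hs2. }
set (u := - / th).
assert (hu : 0 < u) by (unfold u; apply Ropp_0_gt_lt_contravar, Rinv_lt_0_compat; exact hth).
set (c1 := Rpower (b / S) (1 + th)).
assert (hc1 : 0 < c1) by apply Rpower_pos.
set (A := 2 * S + u * S * c1).
assert (hA : 0 < A).
{ unfold A. assert (0 < u * S * c1) by (repeat apply Rmult_lt_0_compat; lra). lra. }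
set (tau1 := Rabs (ln (b / (2 * A))) / q).
assert (he0 : 0 < 1 / (4 * (1 + u))) by (apply Rdiv_lt_0_compat; lra).
destruct (Phi_lim _ he0) as [M0 HM0].
set (L := ln (S / b)).
assert (hL : 0 <= L).
{ unfold L. rewrite <- ln_1. apply ln_le. lra.
  apply (Rmult_le_reg_r b). exact hb. unfold Rdiv. rewrite Rmult_assoc, Rinv_l by lra. lra. }
set (c := sigma ^ 2 / 2 + q).
assert (hc : 0 < c) by (unfold c; lra).
set (s0 := Rmax 1 ((Rabs M0 * sigma + L + 1) / c)).
exists (t + Rmax (s0 * s0) tau1 + 1).
split.
{ assert (0 <= Rmax (s0 * s0) tau1).
  { eapply Rle_trans. 2: apply Rmax_l. apply Rle_0_sqr. }
  lra. }
intros T HT.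
set (tau := T - t).
assert (htau1 : tau1 < tau).
{ assert (H := Rmax_r (s0 * s0) tau1). unfold tau. lra. }
assert (htau0 : s0 * s0 < tau).
{ assert (H := Rmax_l (s0 * s0) tau1). unfold tau. lra. }
assert (hs0 : 1 <= s0) by apply Rmax_l.
assert (htaupos : 0 < tau) by nra.
set (s := sqrt tau).
assert (hs : 0 < s) by (apply sqrt_lt_R0; exact htaupos).
assert (hss : s * s = tau) by (apply sqrt_sqrt; lra).
assert (hss0 : s0 <= s).
{ destruct (Rle_lt_dec s0 s) as [H|H]. exact H. exfalso. nra. }
assert (hE : exp (- q * tau) * A < b / 2).
{ assert (h1 : - q * tau < ln (b / (2 * A))).
  { assert (h2 : Rabs (ln (b / (2 * A))) < q * tau).
    { unfold tau1 in htau1. apply (Rmult_lt_compat_l q) in htau1. 2: exact hq.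
      replace (q * (Rabs (ln (b / (2 * A))) / q)) with (Rabs (ln (b / (2 * A)))) in htau1 by (field; lra).
      exact htau1. }
    assert (h3 := Rle_abs (- ln (b / (2 * A)))). rewrite Rabs_Ropp in h3. lra. }
  apply exp_increasing in h1. rewrite exp_ln in h1.
  2: { apply Rdiv_lt_0_compat; lra. }
  apply (Rmult_lt_compat_r A) in h1. 2: exact hA.
  replace (b / (2 * A) * A) with (b / 2) in h1 by (field; lra). exact h1. }
set (B := - ((ln (S / b) + (0 - q + sigma ^ 2 / 2) * tau) / (sigma * s)) + sigma * s).
assert (hB : M0 < B).
{ assert (hB' : B = (c * (s * s) - L) / (sigma * s)).
  { unfold B, c, L. rewrite <- hss. field. split; lra. }
  rewrite hB'.
  assert (hsig : 0 < sigma * s) by (apply Rmult_lt_0_compat; lra).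
  apply (Rmult_lt_reg_r (sigma * s)). exact hsig.
  unfold Rdiv. rewrite Rmult_assoc, Rinv_l by lra. rewrite Rmult_1_r.
  assert (h1 : (Rabs M0 * sigma + L + 1) / c <= s).
  { eapply Rle_trans. apply Rmax_r. exact hss0. }
  assert (h2 : Rabs M0 * sigma + L + 1 <= c * s).
  { apply (Rmult_le_compat_l c) in h1. 2: lra.
    replace (c * ((Rabs M0 * sigma + L + 1) / c)) with (Rabs M0 * sigma + L + 1) in h1 by (field; lra).
    exact h1. }
  assert (h3 : M0 <= Rabs M0) by apply Rle_abs.
  assert (h4 : M0 * sigma * s <= Rabs M0 * sigma * s).
  { apply Rmult_le_compat_r. lra. apply Rmult_le_compat_r; lra. }
  assert (h5 : (Rabs M0 * sigma + L + 1) * 1 <= c * s * s).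
  { apply Rmult_le_compat; try lra.
    assert (0 <= Rabs M0) by apply Rabs_pos. nra. }
  nra. }
specialize (HM0 B hB).
set (c2 := Rpower (K / b) (th - 1)).
assert (hKb : 1 <= K / b).
{ apply (Rmult_le_reg_r b). exact hb. unfold Rdiv. rewrite Rmult_assoc, Rinv_l by lra. lra. }
assert (hc2 : 0 <= K * c2 <= b).
{ split. { left. apply Rmult_lt_0_compat. lra. apply Rpower_pos. }
  assert (h1 : c2 <= Rpower (K / b) (Ropp 1)).
  { apply Rle_Rpower. exact hKb. lra. }
  rewrite Rpower_Ropp, Rpower_1 in h1 by lra.
  apply (Rmult_le_compat_l K) in h1. 2: lra.
  replace (K * / (K / b)) with b in h1 by (field; lra). exact h1. }
unfold nneg_price. cbv zeta.
fold tau. fold s. fold th. fold c1. fold c2.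
fold B.
apply main_ineq; try (apply Phi_bounds); try lra.
- apply exp_pos.
- replace (- 0 * tau) with 0 by ring. apply exp_0.
- fold u. lra.
- fold u. fold A. lra.
Qed.
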